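(* In the setting described in the context: (i) $\operatorname{Tr}_{K/\mathbb{Q}}(\delta_A\alpha)=1$ for each $\alpha\in\{1,\varepsilon_1,\varepsilon_1^{6n+1}\varepsilon_2,\varepsilon_1^{6n+2}\varepsilon_2,\varepsilon_1^{6n+1}\varepsilon_3,\varepsilon_1^{6n+2}\varepsilon_3,\varepsilon_2\varepsilon_3,\varepsilon_1\varepsilon_2\varepsilon_3,\rho\varepsilon_2,\rho\varepsilon_1\varepsilon_2,\gamma_{6n}\varepsilon_1,\gamma_{6n}\varepsilon_1^2,\gamma_{6n+1}\varepsilon_2\varepsilon_3,\gamma_{6n+1}\varepsilon_1\varepsilon_2\varepsilon_3\}$; (ii) for $1\le j\le 3n$, $\operatorname{Tr}_{K/\mathbb{Q}}(\delta_{B,j}^+\alpha)=1$ for each $\alpha\in\{1,\varepsilon_1,\varepsilon_1^{2j-1}\varepsilon_3,\varepsilon_1^{2j}\varepsilon_3,\gamma_{2j-2}\varepsilon_1,\gamma_{2j-2}\varepsilon_1^2,\gamma_{2j},\gamma_{2j}\varepsilon_1\}$; (iii) for $1\le j\le 3n$, $\operatorname{Tr}_{K/\mathbb{Q}}(\delta_{B,j}^-\alpha)=1$ for each $\alpha\in\{1,\varepsilon_1,\varepsilon_1^{2j-1}\varepsilon_3^{-1},\varepsilon_1^{2j}\varepsilon_3^{-1},\gamma_{2j-1},\gamma_{2j-1}\varepsilon_1,\gamma_{2j+1}\varepsilon_1^{-1},\gamma_{2j+1}\}$; (iv) for $1\le j\le 6n+1$, $\operatorname{Tr}_{K/\mathbb{Q}}(\delta_{C,j}^+\alpha)=1$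 for each $\alpha\in\{\varepsilon_1^{-1},1,\varepsilon_1^{-j}\varepsilon_2,\varepsilon_1^{-j+1}\varepsilon_2\}$; (v) for $1\le j\le 6n+1$, $\operatorname{Tr}_{K/\mathbb{Q}}(\delta_{C,j}^-\alpha)=1$ for each $\alpha\in\{1,\varepsilon_1,\varepsilon_1^{j-1}\varepsilon_2,\varepsilon_1^{j}\varepsilon_2\}$.
   Context: For integers $m\ge0$ define integers $x_m,y_m$ by $\frac{x_m+y_m\sqrt5}{2}=\big(\frac{1+\sqrt5}{2}\big)^m$. Let $n\ge0$ be an integer such that $p:=y_{12n+3}^2-1$ and $r:=x_{12n+3}^2-1$ are squarefree, and let $K=\mathbb{Q}(\sqrt5,\sqrt p)$ (note $r=5p$, so $\sqrt r\in K$). Write $X=x_{12n+3}$, $Y=y_{12n+3}$, $[a,b,c,d]:=a+b\sqrt5+c\sqrt p+d\sqrt r$, and $\varepsilon_1=\frac{3+\sqrt5}{2}$, $\varepsilon_2=Y+\sqrt p$, $\varepsilon_3=X+\sqrt r$. Define $\rho:=[\frac{X+Y}{2},0,-\frac12,\frac12]$; for $1\le j\le 6n+1$, $\gamma_j:=[\frac{y_{2j-1}X+1}{2},\frac{x_{2j-1}X-(-1)^j}{10},(-1)^j\frac{x_{2j-1}}{2},(-1)^j\frac{y_{2j-1}}{2}]$, and $\gamma_0:=\gamma_1\varepsilon_1^{-1}\varepsilon_3$. Further \[ \delta_A:=\Big[\tfrac14,-\tfrac1{20},0,-\tfrac{1}{5(X+Y)}\Big],\quad \delta_{B,j}^{\pm}:=\Big[\tfrac14,-\tfrac1{20},\pm\tfrac{X-x_{4j-1}}{20p},\mp\tfrac{X-y_{4j-1}}{4r}\Big]\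 (1\le j\le 3n), \] \[ \delta_{C,j}^{\pm}:=\Big[\tfrac14,\pm\tfrac1{20},-\tfrac{Y-y_{2j-1}}{4p},\mp\tfrac{Y-x_{2j-1}}{4r}\Big]\ (1\le j\le 6n+1). \] *)

(* Defs.v *)
(* the field K = Q(sqrt 5, sqrt p) modelled concretely by
   coordinates over rat in the Q-basis (1, sqrt 5, sqrt p, sqrt r), r = 5p. *)
From mathcomp Require Import all_boot all_order all_algebra.
Set Implicit Arguments. Unset Strict Implicit. Unset Printing Implicit Defensive.
Import Order.TTheory GRing.Theory Num.Theory.
Local Open Scope ring_scope.

(* (x_m, y_m) with (x_m + y_m sqrt5)/2 = ((1+sqrt5)/2)^m :
   multiplying by (1+sqrt5)/2 gives x' = (x+5y)/2, y' = (x+y)/2. *)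
Fixpoint xy (m : nat) : rat * rat :=
  match m with
  | 0%N => (2, 0)
  | m'.+1 => let: (x, y) := xy m' in ((x + 5 * y) / 2, (x + y) / 2)
  end.
Definition xs (m : nat) : rat := (xy m).1.
Definition ys (m : nat) : rat := (xy m).2.

Definition sqfree (q : rat) : Prop :=
  exists z : int, q = z%:~R /\ forall d : int, (d * d %| z)%Z -> `|d| = 1.

(* [a,b,c,d] = a + b sqrt5 + c sqrt p + d sqrt r *)
Record Kel := mkK { k1 : rat; k5 : rat; kp : rat; kr : rat }.

Section Arith.
Variable p : rat.
Definition addK (u v : Kel) : Kel :=
  mkK (k1 u + k1 v) (k5 u + k5 v) (kp u + kp v) (kr u + kr v).
Definition scaleK (t : rat) (u : Kel) : Kel :=
  mkK (t * k1 u) (t * k5 u) (t * kp u) (t * kr u).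
(* sqrt5^2 = 5, sqrtp^2 = p, sqrtr^2 = 5p, sqrt5 sqrtp = sqrtr,
   sqrt5 sqrtr = 5 sqrtp, sqrtp sqrtr = p sqrt5 *)
Definition mulK (u v : Kel) : Kel :=
  let: mkK a b c d := u in let: mkK a' b' c' d' := v in
  mkK (a * a' + 5 * b * b' + p * c * c' + 5 * p * d * d')
      (a * b' + b * a' + p * (c * d' + d * c'))
      (a * c' + c * a' + 5 * (b * d' + d * b'))
      (a * d' + d * a' + b * c' + c * b').
Definition oneK := mkK 1 0 0 0.
Definition e5 := mkK 0 1 0 0.
Definition ep := mkK 0 0 1 0.
Definition er := mkK 0 0 0 1.
(* Galois conjugates sigma_{s,t}: sqrt5 -> s sqrt5, sqrtp -> t sqrtp *)
Definition conjK (s t : rat) (u : Kel) : Kel :=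
  mkK (k1 u) (s * k5 u) (t * kp u) (s * t * kr u).
(* norm N_{K/Q} and inverse u^{-1} = (prod of the other conjugates) / N(u) *)
Definition otherconj (u : Kel) : Kel :=
  mulK (conjK (-1) 1 u) (mulK (conjK 1 (-1) u) (conjK (-1) (-1) u)).
Definition normK (u : Kel) : rat := k1 (mulK u (otherconj u)).
Definition invK (u : Kel) : Kel := scaleK (normK u)^-1 (otherconj u).
Fixpoint expK (u : Kel) (k : nat) : Kel :=
  match k with 0%N => oneK | k'.+1 => mulK u (expK u k') end.
Definition zexpK (u : Kel) (k : int) : Kel :=
  match k with Posz m => expK u m | Negz m => expK (invK u) m.+1 end.
(* Tr_{K/Q}(u) = trace of the Q-linear map v |-> u v in the basis
   (1, sqrt5, sqrtp, sqrtr) *)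
Definition trK (u : Kel) : rat :=
  k1 (mulK u oneK) + k5 (mulK u e5) + kp (mulK u ep) + kr (mulK u er).
End Arith.

Section Data.
Variable n : nat.
Definition XX : rat := xs (12 * n + 3).
Definition YY : rat := ys (12 * n + 3).
Definition pp : rat := YY ^+ 2 - 1.
Definition rr : rat := XX ^+ 2 - 1.
Definition eps1 : Kel := mkK (3/2) (1/2) 0 0.
Definition eps2 : Kel := mkK YY 0 1 0.
Definition eps3 : Kel := mkK XX 0 0 1.
Definition rho : Kel := mkK ((XX + YY) / 2) 0 (- (1/2)) (1/2).
Definition gamma_pos (j : nat) : Kel :=
  mkK ((ys (2 * j - 1) * XX + 1) / 2)
      ((xs (2 * j - 1) * XX - (-1) ^+ j) / 10)
      ((-1) ^+ j * xs (2 * j - 1) / 2)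
      ((-1) ^+ j * ys (2 * j - 1) / 2).
Definition gamma (j : nat) : Kel :=
  if j == 0%N then mulK pp (mulK pp (gamma_pos 1) (invK pp eps1)) eps3
  else gamma_pos j.
Definition deltaA : Kel := mkK (1/4) (- (1/20)) 0 (- (1 / (5 * (XX + YY)))).
(* s = 1 for the + sign, s = -1 for the - sign *)
Definition deltaB (s : rat) (j : nat) : Kel :=
  mkK (1/4) (- (1/20)) (s * ((XX - xs (4 * j - 1)) / (20 * pp)))
      (- s * ((XX - ys (4 * j - 1)) / (4 * rr))).
Definition deltaC (s : rat) (j : nat) : Kel :=
  mkK (1/4) (s * (1/20)) (- ((YY - ys (2 * j - 1)) / (4 * pp)))
      (- s * ((YY - xs (2 * j - 1)) / (4 * rr))).
End Data.

(* Main.v *)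
Require Import Defs.
From mathcomp Require Import all_boot all_order all_algebra.
From mathcomp Require Import ring lra zify.
From Stdlib Require List.
Import Order.TTheory GRing.Theory Num.Theory.
Local Open Scope ring_scope.

Lemma xsS m : xs m.+1 = (xs m + 5 * ys m) / 2.
Proof. by rewrite /xs /ys /=; case: (xy m). Qed.
Lemma ysS m : ys m.+1 = (xs m + ys m) / 2.
Proof. by rewrite /xs /ys /=; case: (xy m). Qed.
Lemma xs0 : xs 0 = 2. Proof. by []. Qed.
Lemma ys0 : ys 0 = 0. Proof. by []. Qed.
Lemma xsP m : xs m = (5 * ys m.+1 - xs m.+1) / 2.
Proof. by rewrite xsS ysS; field. Qed.
Lemma ysP m : ys m = (xs m.+1 - ys m.+1) / 2.
Proof. by rewrite xsS ysS; field. Qed.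
Lemma normxy m : xs m ^+ 2 = 5 * ys m ^+ 2 + 4 * (-1) ^+ m.
Proof.
elim: m => [|m IH]; first by rewrite xs0 ys0.
have E : ((-1:rat) ^+ m) = (xs m ^+ 2 - 5 * ys m ^+ 2) / 4 by rewrite IH; field.
by rewrite [(-1) ^+ _.+1]exprS E xsS ysS; field.
Qed.
Lemma normodd k : xs (2 * k + 1) ^+ 2 = 5 * ys (2 * k + 1) ^+ 2 - 4.
Proof. by rewrite normxy -signr_odd oddD oddM /= expr1 mulrN1. Qed.
Lemma xy_ge m : 0 <= ys m <= xs m.
Proof.
elim: m => [|m /andP[h1 h2]]; first by rewrite xs0 ys0.
rewrite xsS ysS; apply/andP; split; lra.
Qed.
Lemma ys_ge2 k : 2 <= ys (k + 3).
Proof.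
elim: k => [|k IH]; first by rewrite add0n !(xsS, ysS) xs0 ys0; lra.
rewrite addSn ysS; have /andP[h1 h2] := xy_ge (k+3); lra.
Qed.

Lemma mulK_mk p a b c d a' b' c' d' : mulK p (mkK a b c d) (mkK a' b' c' d') =
  mkK (a * a' + 5 * b * b' + p * c * c' + 5 * p * d * d')
      (a * b' + b * a' + p * (c * d' + d * c'))
      (a * c' + c * a' + 5 * (b * d' + d * b'))
      (a * d' + d * a' + b * c' + c * b').
Proof. by []. Qed.
Lemma conjK_mk s t a b c d : conjK s t (mkK a b c d) = mkK a (s * b) (t * c) (s * t * d).
Proof. by []. Qed.
Lemma scaleK_mk t a b c d : scaleK t (mkK a b c d) = mkK (t * a) (t * b) (t * c) (t * d).
Proof. by []. Qed.
Lemma k1_mk a b c d : k1 (mkK a b c d) = a. Proof. by []. Qed.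
Lemma k5_mk a b c d : k5 (mkK a b c d) = b. Proof. by []. Qed.
Lemma kp_mk a b c d : kp (mkK a b c d) = c. Proof. by []. Qed.
Lemma kr_mk a b c d : kr (mkK a b c d) = d. Proof. by []. Qed.
Lemma invK_mk p u : invK p u = scaleK (k1 (mulK p u (otherconj p u)))^-1 (otherconj p u).
Proof. by []. Qed.
Lemma otherconj_mk p u : otherconj p u = 
  mulK p (conjK (-1) 1 u) (mulK p (conjK 1 (-1) u) (conjK (-1) (-1) u)).
Proof. by []. Qed.

Ltac kred := rewrite ?invK_mk ?otherconj_mk ?conjK_mk ?mulK_mk ?scaleK_mk ?k1_mk ?k5_mk ?kp_mk ?kr_mk.

Lemma invE1 p : invK p eps1 = mkK (3/2) (-(1/2)) 0 0.
Proof. rewrite /eps1; kred. congr mkK; by field. Qed.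

Lemma trKE p u : trK p u = 4 * k1 u.
Proof. case: u => a b c d; rewrite /trK /oneK /e5 /ep /er; kred; ring. Qed.

Lemma expKS p u k : expK p u k.+1 = mulK p u (expK p u k). Proof. by []. Qed.
Lemma expK0 p u : expK p u 0 = mkK 1 0 0 0. Proof. by []. Qed.

Lemma expE1 p k : expK p eps1 k = mkK (xs (2*k) / 2) (ys (2*k) / 2) 0 0.
Proof.
elim: k => [|k IH]; first by rewrite expK0 muln0 xs0 ys0; congr mkK; field.
rewrite expKS IH (_ : (2 * k.+1 = (2 * k).+2)%N); last by lia.
set a := xs (2*k); set b := ys (2*k).
rewrite !(xsS, ysS) /eps1; kred; congr mkK; by field.
Qed.

Lemma expE1i p k : expK p (invK p eps1) k = mkK (xs (2*k) / 2) (- ys (2*k) / 2) 0 0.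
Proof.
elim: k => [|k IH]; first by rewrite expK0 muln0 xs0 ys0; congr mkK; field.
rewrite expKS IH invE1 (_ : (2 * k.+1 = (2 * k).+2)%N); last by lia.
set a := xs (2*k); set b := ys (2*k).
rewrite !(xsS, ysS); kred; congr mkK; by field.
Qed.

Lemma E1pos p k : zexpK p eps1 (Posz k) = mkK (xs (2*k) / 2) (ys (2*k) / 2) 0 0.
Proof. exact: expE1. Qed.
Lemma E1neg p k : zexpK p eps1 (Negz k) = mkK (xs (2*k.+1) / 2) (- ys (2*k.+1) / 2) 0 0.
Proof. exact: expE1i. Qed.

Lemma RX n : XX n ^+ 2 = 5 * YY n ^+ 2 - 4.
Proof. rewrite /XX /YY (_ : (12 * n + 3 = 2 * (6 * n + 1) + 1)%N); [exact: normodd | lia]. Qed.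
Lemma Yge n : 2 <= YY n.
Proof. exact: ys_ge2. Qed.
Lemma XgeY n : YY n <= XX n.
Proof. by have /andP[] := xy_ge (12 * n + 3). Qed.

Lemma inve3 n : invK (pp n) (eps3 n) = mkK (XX n) 0 0 (-1).
Proof.
have h := RX n; rewrite /pp /eps3; kred.
move: h; generalize (XX n) (YY n) => X Y h; congr mkK; field: h; match goal with |- is_true (?E != _) => have ->: E = 1 by ring: h end; exact: oner_neq0.
Qed.

Ltac sidec := repeat (apply/andP; split); rewrite gt_eqF //; nra.

Lemma xs1 : xs 1 = 1. Proof. by rewrite xsS xs0 ys0; field. Qed.
Lemma ys1 : ys 1 = 1. Proof. by rewrite ysS xs0 ys0; field. Qed.
Lemma xs2 : xs 2 = 3. Proof. by rewrite xsS xs1 ys1; field. Qed.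
Lemma ys2 : ys 2 = 1. Proof. by rewrite ysS xs1 ys1; field. Qed.

Lemma partV n i a : List.In a [:: oneK; eps1; mulK (pp n) (zexpK (pp n) eps1 ((i.+1)%:Z - 1)) (eps2 n);
   mulK (pp n) (zexpK (pp n) eps1 (i.+1)%:Z) (eps2 n)] ->
   trK (pp n) (mulK (pp n) (deltaC n (-1) i.+1) a) = 1.
Proof.
have e1 : ((i.+1)%:Z - 1 = i%:Z) by lia.
rewrite e1 !E1pos /deltaC (_ : (2 * i.+1 - 1 = 2 * i + 1)%N); last by lia.
rewrite (_ : (2 * i.+1 = (2 * i + 1).+1)%N); last by lia.
rewrite (xsP (2 * i)) (ysP (2 * i)) addn1 !(xsS (2 * i).+1) !(ysS (2 * i).+1).
have ha := normodd i; rewrite addn1 in ha.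
have h := RX n. have hY := Yge n. have hXY := XgeY n.
rewrite trKE /eps2 /oneK /eps1 /pp /rr.
move: ha h hY hXY; generalize (xs (2 * i).+1) (ys (2 * i).+1) (XX n) (YY n) => x y X Y ha h hY hXY.
case=> [<-|[<-|[<-|[<-|[]]]]].
all: kred; field: ha h; sidec.
Qed.

Lemma E1m1 p i : zexpK p eps1 (- (i.+1)%:Z + 1) = mkK (xs (2*i)/2) (- ys (2*i)/2) 0 0.
Proof.
case: i => [|i].
  have -> : (- (1%N)%:Z + 1 = Posz 0) by [].
  by rewrite E1pos muln0 ys0 oppr0.
have -> : (- (i.+2)%:Z + 1 = Negz i) by rewrite NegzE; lia.
by rewrite E1neg.
Qed.

Lemma partIV n i a : List.In a [:: zexpK (pp n) eps1 (-1); oneK;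
   mulK (pp n) (zexpK (pp n) eps1 (- (i.+1)%:Z)) (eps2 n);
   mulK (pp n) (zexpK (pp n) eps1 (- (i.+1)%:Z + 1)) (eps2 n)] ->
   trK (pp n) (mulK (pp n) (deltaC n 1 i.+1) a) = 1.
Proof.
have -> : (-1 : int) = Negz 0 by [].
have -> : (- (i.+1)%:Z) = Negz i by [].
rewrite E1m1 !E1neg muln1 xs2 ys2 /deltaC (_ : (2 * i.+1 - 1 = 2 * i + 1)%N); last by lia.
rewrite (_ : (2 * i.+1 = (2 * i + 1).+1)%N); last by lia.
rewrite (xsP (2 * i)) (ysP (2 * i)) addn1 !(xsS (2 * i).+1) !(ysS (2 * i).+1).
have ha := normodd i; rewrite addn1 in ha.
have h := RX n. have hY := Yge n. have hXY := XgeY n.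
rewrite trKE /eps2 /oneK /eps1 /pp /rr.
move: ha h hY hXY; generalize (xs (2 * i).+1) (ys (2 * i).+1) (XX n) (YY n) => x y X Y ha h hY hXY.
case=> [<-|[<-|[<-|[<-|[]]]]].
all: kred; field: ha h; sidec.
Qed.

Lemma xsS2 m : xs m.+2 = (3 * xs m + 5 * ys m) / 2. Proof. by rewrite !(xsS, ysS); field. Qed.
Lemma ysS2 m : ys m.+2 = (xs m + 3 * ys m) / 2. Proof. by rewrite !(xsS, ysS); field. Qed.
Lemma xsS3 m : xs m.+3 = 2 * xs m + 5 * ys m. Proof. by rewrite !(xsS, ysS); field. Qed.
Lemma ysS3 m : ys m.+3 = xs m + 2 * ys m. Proof. by rewrite !(xsS, ysS); field. Qed.
Lemma xsS4 m : xs m.+4 = (7 * xs m + 15 * ys m) / 2. Proof. by rewrite !(xsS, ysS); field. Qed.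
Lemma ysS4 m : ys m.+4 = (3 * xs m + 7 * ys m) / 2. Proof. by rewrite !(xsS, ysS); field. Qed.

Definition Gm n u v s := mkK ((v * XX n + 1)/2) ((u * XX n - s)/10) (s*u/2) (s*v/2).
Definition bx (u v : rat) := (5 * v - u) / 2.
Definition byy (u v : rat) := (u - v) / 2.

Lemma gamma_odd n i : gamma n (2*i).+1 = Gm n (xs (4*i).+1) (ys (4*i).+1) (-1).
Proof.
have sg : (-1 : rat) ^+ (2*i).+1 = -1 by rewrite -signr_odd oddS oddM /= expr1.
rewrite /gamma; case: eqP => [//|_]; rewrite /gamma_pos sg (_ : (2 * (2*i).+1 - 1 = (4*i).+1)%N) //; lia.
Qed.
Lemma gamma_evp n i : gamma n (2*i).+2 = Gm n (xs (4*i).+3) (ys (4*i).+3) 1.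
Proof.
have sg : (-1 : rat) ^+ (2*i).+2 = 1 by rewrite -signr_odd !oddS oddM /= expr0.
rewrite /gamma; case: eqP => [//|_]; rewrite /gamma_pos sg (_ : (2 * (2*i).+2 - 1 = (4*i).+3)%N) //; lia.
Qed.
Lemma gamma_ev n i : gamma n (2*i) =
  Gm n (bx (bx (xs (4*i).+1) (ys (4*i).+1)) (byy (xs (4*i).+1) (ys (4*i).+1)))
       (byy (bx (xs (4*i).+1) (ys (4*i).+1)) (byy (xs (4*i).+1) (ys (4*i).+1))) 1.
Proof.
case: i => [|i].
  rewrite muln0 /gamma; case: eqP => [_|//]; rewrite /gamma_pos (_ : (2 * 1 - 1 = 1)%N) // expr1 xs1 ys1 invE1 /eps3 /Gm /bx /byy.
  have h := RX n.
  move: h; rewrite /pp; generalize (XX n) (YY n) => X Y h.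
  kred; congr mkK; by field: h.
rewrite (_ : (2 * i.+1 = (2*i).+2)%N); last by lia.
rewrite (_ : (4 * i.+1).+1 = ((4*i).+3).+2)%N; last by lia.
rewrite gamma_evp (xsS2 (4*i).+3) (ysS2 (4*i).+3) /Gm /bx /byy.
move: (xs _) (ys _) => u v.
generalize (xs (4*i).+3) (ys (4*i).+3) (XX n) => u1 v1 X1.
congr mkK; by field.
Qed.

Lemma xs4 : xs 4 = 7. Proof. by rewrite (xsS2 2) xs2 ys2; field. Qed.
Lemma ys4 : ys 4 = 3. Proof. by rewrite (ysS2 2) xs2 ys2; field. Qed.

Lemma e3inv n : zexpK (pp n) (eps3 n) (-1) = mkK (XX n) 0 0 (-1).
Proof.
have -> : (-1 : int) = Negz 0 by [].
rewrite /zexpK expKS expK0 inve3; kred; congr mkK; ring.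
Qed.

Lemma partII n i a : List.In a [:: oneK; eps1;
  mulK (pp n) (zexpK (pp n) eps1 (2 * i.+1 - 1)%N%:Z) (eps3 n);
  mulK (pp n) (zexpK (pp n) eps1 (2 * i.+1)%N%:Z) (eps3 n);
  mulK (pp n) (gamma n (2 * i.+1 - 2)%N) eps1;
  mulK (pp n) (gamma n (2 * i.+1 - 2)%N) (zexpK (pp n) eps1 2);
  gamma n (2 * i.+1)%N; mulK (pp n) (gamma n (2 * i.+1)%N) eps1] ->
  trK (pp n) (mulK (pp n) (deltaB n 1 i.+1) a) = 1.
Proof.
rewrite /deltaB (_ : (4 * i.+1 - 1 = (4*i).+3)%N); last by lia.
rewrite (_ : (2 * i.+1 - 1 = (2*i).+1)%N); last by lia.
rewrite (_ : (2 * i.+1 - 2 = 2*i)%N); last by lia.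
rewrite (_ : (2 * i.+1 = (2*i).+2)%N); last by lia.
rewrite gamma_ev gamma_evp !E1pos (_ : (2 * 2 = 4)%N) // xs4 ys4.
rewrite (_ : (2 * (2*i).+1 = (4*i).+2)%N); last by lia.
rewrite (_ : (2 * (2*i).+2 = (4*i).+4)%N); last by lia.
rewrite (xsS (4*i).+1) (ysS (4*i).+1) (xsS2 (4*i).+1) (ysS2 (4*i).+1) (xsS3 (4*i).+1) (ysS3 (4*i).+1).
have ha := normodd (2*i); rewrite (_ : (2 * (2*i) + 1 = (4*i).+1)%N) in ha; last by lia.
have h := RX n. have hY := Yge n. have hXY := XgeY n.
rewrite trKE /eps3 /oneK /eps1 /pp /rr /Gm /bx /byy.
move: ha h hY hXY; generalize (xs (4 * i).+1) (ys (4 * i).+1) (XX n) (YY n) => x y X Y ha h hY hXY.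
case=> [<-|[<-|[<-|[<-|[<-|[<-|[<-|[<-|[]]]]]]]]].
all: kred; field: ha h; sidec.
Qed.

Lemma partIII n i a : List.In a [:: oneK; eps1;
  mulK (pp n) (zexpK (pp n) eps1 (2 * i.+1 - 1)%N%:Z) (zexpK (pp n) (eps3 n) (-1));
  mulK (pp n) (zexpK (pp n) eps1 (2 * i.+1)%N%:Z) (zexpK (pp n) (eps3 n) (-1));
  gamma n (2 * i.+1 - 1)%N; mulK (pp n) (gamma n (2 * i.+1 - 1)%N) eps1;
  mulK (pp n) (gamma n (2 * i.+1 + 1)%N) (zexpK (pp n) eps1 (-1));
  gamma n (2 * i.+1 + 1)%N] ->
  trK (pp n) (mulK (pp n) (deltaB n (-1) i.+1) a) = 1.
Proof.
have -> : (-1 : int) = Negz 0 by [].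
rewrite /deltaB (_ : (4 * i.+1 - 1 = (4*i).+3)%N); last by lia.
rewrite (_ : (2 * i.+1 - 1 = (2*i).+1)%N); last by lia.
rewrite (_ : (2 * i.+1 + 1 = (2*i.+1).+1)%N); last by lia.
rewrite !gamma_odd.
rewrite (_ : (2 * i.+1 = (2*i).+2)%N); last by lia.
rewrite e3inv !E1pos E1neg muln1 xs2 ys2.
rewrite (_ : (2 * (2*i).+1 = (4*i).+2)%N); last by lia.
rewrite (_ : (2 * (2*i).+2 = (4*i).+4)%N); last by lia.
rewrite (_ : ((4 * i.+1).+1 = (4*i).+1.+4)%N); last by lia.
rewrite (xsS (4*i).+1) (ysS (4*i).+1) (xsS2 (4*i).+1) (ysS2 (4*i).+1) (xsS3 (4*i).+1) (ysS3 (4*i).+1) (xsS4 (4*i).+1) (ysS4 (4*i).+1).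
have ha := normodd (2*i); rewrite (_ : (2 * (2*i) + 1 = (4*i).+1)%N) in ha; last by lia.
have h := RX n. have hY := Yge n. have hXY := XgeY n.
rewrite trKE /oneK /eps1 /pp /rr /Gm.
move: ha h hY hXY; generalize (xs (4 * i).+1) (ys (4 * i).+1) (XX n) (YY n) => x y X Y ha h hY hXY.
case=> [<-|[<-|[<-|[<-|[<-|[<-|[<-|[<-|[]]]]]]]]].
all: kred; field: ha h; sidec.
Qed.

Lemma partI n a : List.In a [:: oneK; eps1;
  mulK (pp n) (zexpK (pp n) eps1 (6 * n + 1)%N%:Z) (eps2 n);
  mulK (pp n) (zexpK (pp n) eps1 (6 * n + 2)%N%:Z) (eps2 n);
  mulK (pp n) (zexpK (pp n) eps1 (6 * n + 1)%N%:Z) (eps3 n);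
  mulK (pp n) (zexpK (pp n) eps1 (6 * n + 2)%N%:Z) (eps3 n);
  mulK (pp n) (eps2 n) (eps3 n); mulK (pp n) eps1 (mulK (pp n) (eps2 n) (eps3 n));
  mulK (pp n) (rho n) (eps2 n); mulK (pp n) (rho n) (mulK (pp n) eps1 (eps2 n));
  mulK (pp n) (gamma n (6 * n)%N) eps1; mulK (pp n) (gamma n (6 * n)%N) (zexpK (pp n) eps1 2);
  mulK (pp n) (gamma n (6 * n + 1)%N) (mulK (pp n) (eps2 n) (eps3 n));
  mulK (pp n) (gamma n (6 * n + 1)%N) (mulK (pp n) eps1 (mulK (pp n) (eps2 n) (eps3 n)))] ->
  trK (pp n) (mulK (pp n) (deltaA n) a) = 1.
Proof.
have h := RX n. have hY := Yge n. have hXY := XgeY n.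
rewrite (_ : (6*n+1 = (2*(3*n)).+1)%N); last by lia.
rewrite (_ : (6*n+2 = (2*(3*n)).+2)%N); last by lia.
rewrite (_ : (6*n = 2*(3*n))%N); last by lia.
rewrite gamma_ev gamma_odd !E1pos (_ : (2 * 2 = 4)%N) // xs4 ys4.
rewrite (_ : (4 * (3*n) = 12 * n)%N); last by lia.
rewrite (_ : (2 * (2*(3*n)).+1 = (12*n).+2)%N); last by lia.
rewrite (_ : (2 * (2*(3*n)).+2 = (12*n).+4)%N); last by lia.
rewrite (xsS (12*n).+3) (ysS (12*n).+3).
rewrite (xsP (12*n).+1) (ysP (12*n).+1).
rewrite (xsP (12*n).+2) (ysP (12*n).+2).
rewrite trKE /oneK /eps1 /eps2 /eps3 /rho /deltaA /pp /rr /Gm /bx /byy.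
move: h hY hXY; rewrite /XX /YY (_ : (12 * n + 3 = (12*n).+3)%N); last by lia.
generalize (xs (12 * n).+3) (ys (12 * n).+3) => X Y h hY hXY.
case=> [<-|[<-|[<-|[<-|[<-|[<-|[<-|[<-|[<-|[<-|[<-|[<-|[<-|[<-|[]]]]]]]]]]]]]]].
all: kred; field: h; sidec.
Qed.

Theorem proposition4p3 (n : nat) :
  sqfree (pp n) -> sqfree (rr n) ->
  let p := pp n in
  let M := mulK p in
  let Tr := trK p in
  let e1 := eps1 in let e2 := eps2 n in let e3 := eps3 n in
  let E1 := zexpK p e1 in
  let g := gamma n in
  (* (i) *)
  (forall a, List.In a
     [:: oneK; e1; M (E1 (6 * n + 1)%N%:Z) e2; M (E1 (6 * n + 2)%N%:Z) e2;
         M (E1 (6 * n + 1)%N%:Z) e3; M (E1 (6 * n + 2)%N%:Z) e3;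
         M e2 e3; M e1 (M e2 e3);
         M (rho n) e2; M (rho n) (M e1 e2);
         M (g (6 * n)%N) e1; M (g (6 * n)%N) (E1 2);
         M (g (6 * n + 1)%N) (M e2 e3); M (g (6 * n + 1)%N) (M e1 (M e2 e3))] ->
     Tr (M (deltaA n) a) = 1) /\
  (* (ii) *)
  (forall j : nat, (1 <= j <= 3 * n)%N -> forall a, List.In a
     [:: oneK; e1; M (E1 (2 * j - 1)%N%:Z) e3; M (E1 (2 * j)%N%:Z) e3;
         M (g (2 * j - 2)%N) e1; M (g (2 * j - 2)%N) (E1 2);
         g (2 * j)%N; M (g (2 * j)%N) e1] ->
     Tr (M (deltaB n 1 j) a) = 1) /\
  (* (iii) *)
  (forall j : nat, (1 <= j <= 3 * n)%N -> forall a, List.In a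
     [:: oneK; e1; M (E1 (2 * j - 1)%N%:Z) (zexpK p e3 (-1));
         M (E1 (2 * j)%N%:Z) (zexpK p e3 (-1));
         g (2 * j - 1)%N; M (g (2 * j - 1)%N) e1;
         M (g (2 * j + 1)%N) (E1 (-1)); g (2 * j + 1)%N] ->
     Tr (M (deltaB n (-1) j) a) = 1) /\
  (* (iv) *)
  (forall j : nat, (1 <= j <= 6 * n + 1)%N -> forall a, List.In a
     [:: E1 (-1); oneK; M (E1 (- j%:Z)) e2; M (E1 (- j%:Z + 1)) e2] ->
     Tr (M (deltaC n 1 j) a) = 1) /\
  (* (v) *)
  (forall j : nat, (1 <= j <= 6 * n + 1)%N -> forall a, List.In a
     [:: oneK; e1; M (E1 (j%:Z - 1)) e2; M (E1 j%:Z) e2] ->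
     Tr (M (deltaC n (-1) j) a) = 1).
Proof.
move=> _ _ p M Tr e1 e2 e3 E1 g.
split; first exact: partI.
split; first by move=> [|i] // _; exact: partII.
split; first by move=> [|i] // _; exact: partIII.
split; first by move=> [|i] // _; exact: partIV.
by move=> [|i] // _; exact: partV.
Qed.
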